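(* Let $G$, $H$, $J$ be rooted graphs. Then for any integers $g,j\ge 0$ and $h\ge 1$, \[ X_{S^{ghj}(G,H,J)}=X_{S^{(g+j)h0}(G,H,J)}+\sum_{i=1}^{j}\Big(X_{P^{g+h+i-1}(G,H)}\,X_{J^{j-i}}-X_{G^{g+i-1}}\,X_{P^{h+j-i}(H,J)}\Big). \]
   Context: All graphs are finite simple graphs. The chromatic symmetric function of a graph $G$ is $X_G=\sum_{\kappa}\prod_{v\in V(G)}x_{\kappa(v)}$, where $\kappa$ ranges over proper colorings $\kappa:V(G)\to\{1,2,\dots\}$. For nonnegative integers $\tau_1,\tau_2,\tau_3$ and rooted graphs $(G_i,u_i)$, $S^{\tau_1\tau_2\tau_3}(G_1,G_2,G_3)$ is obtained by taking a center vertex $c$ and three paths from $c$, disjoint except at $c$, of lengths $\tau_1,\tau_2,\tau_3$, and identifying $u_i$ with the far end $s_i$ of the $i$-th path ($s_i=c$ if $\tau_i=0$), the $G_i$ being disjoint. For rooted graphs $(G,u)$, $(H,v)$ and $k\ge0$, $P^k(G,H)$ is obtained from the disjoint union of $G$ and $H$ by adding a path of length $k$ joining $u$ and $v$ (for $k=0$ identifying them), and $G^k=P^k(G,K_1)$ is $G$ with a pendant path of length $k$ at its root. *)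

(* Defs.v *)
From HB Require Import structures.
From mathcomp Require Import all_boot all_order all_algebra.
From mathcomp Require Import mpoly.

Import GRing.Theory.
Local Open Scope ring_scope.

Record rooted_graph := RGraph { vtx : finType; adj : rel vtx; root : vtx }.
Arguments adj : clear implicits.
Arguments root : clear implicits.

Definition simple (G : rooted_graph) : Prop :=
  ssrbool.symmetric (adj G) /\ irreflexive (adj G).

(* Glue B onto A by identifying the vertex a of A with the root of B.
   Vertices: V(A) + (V(B) minus its root). The new root is the root of A. *)
Definition glue_vtx (A : rooted_graph) (B : rooted_graph) : finType :=
  (vtx A + {y : vtx B | y != root B})%type.

Definition glue_adj (A : rooted_graph) (a : vtx A) (B : rooted_graph) : rel (glue_vtx A B) :=
  fun x y =>
    match x, y with
    | inl x', inl y' => adj A x' y'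
    | inr x', inr y' => adj B (val x') (val y')
    | inl x', inr y' => (x' == a) && adj B (root B) (val y')
    | inr x', inl y' => (y' == a) && adj B (val x') (root B)
    end.

Definition glue (A : rooted_graph) (a : vtx A) (B : rooted_graph) : rooted_graph :=
  RGraph (glue_vtx A B) (glue_adj A a B) (inl (root A)).

Definition K2 : rooted_graph := RGraph bool (fun x y => x != y) false.

(* ext G k : G with a pendant path of length k attached at its root,
   re-rooted at the far end of the path (the graph G^k; the root only
   serves for further gluing). *)
Fixpoint ext (G : rooted_graph) (k : nat) : rooted_graph :=
  match k with
  | 0 => G
  | k'.+1 => glue K2 (true : vtx K2) (ext G k')
  end.

Definition Gpow (G : rooted_graph) (k : nat) : rooted_graph := ext G k.

(* P^k(G,H): path of length k joining root G and root H *)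
Definition Pk (k : nat) (G H : rooted_graph) : rooted_graph :=
  glue (ext G k) (root (ext G k)) H.

(* S^{t1 t2 t3}(G1,G2,G3): spider with center c = common far end of the
   three pendant paths *)
Definition Sp (t1 t2 t3 : nat) (G1 G2 G3 : rooted_graph) : rooted_graph :=
  let A := glue (ext G1 t1) (root (ext G1 t1)) (ext G2 t2) in
  glue A (root A) (ext G3 t3).

Definition proper (G : rooted_graph) (N : nat) (f : {ffun vtx G -> 'I_N}) : bool :=
  [forall x, forall y, adj G x y ==> (f x != f y)].

(* The chromatic symmetric function X_G truncated to the variables
   x_1..x_N (colours 'I_N), as a polynomial in {mpoly int[N]}. *)
Definition chromsym (N : nat) (G : rooted_graph) : {mpoly int[N]} :=
  \sum_(f : {ffun vtx G -> 'I_N} | proper G N f) \prod_(v : vtx G) 'X_(f v).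

(* Main.v *)
Require Import Defs.
From HB Require Import structures.
From mathcomp Require Import all_boot all_order all_algebra.
From mathcomp Require Import mpoly.
From mathcomp Require Import ring zify.
Import GRing.Theory.
Local Open Scope ring_scope.

Notation root := Defs.root.
Notation proper := Defs.proper.
Section S.
Variable N : nat.
Notation P := {mpoly int[N]}.

Lemma prod_sig (T : finType) (r : T) (F : T -> P) :
  \prod_(y : {y : T | y != r}) F (val y) = \prod_(y | y != r) F y.
Proof.
rewrite [RHS](reindex_omap (val : {y : T | y != r} -> T) insub); last first.
  by move=> i ir; rewrite insubT.
apply: eq_bigl => -[i ir] /=; rewrite insubT ir /=.
by apply/esym/eqP; congr Some; apply: val_inj.
Qed.

Lemma properP (G : rooted_graph) (f : {ffun vtx G -> 'I_N}) :
  reflect (forall x y, adj G x y -> f x != f y) (proper G N f).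
Proof.
apply: (iffP forallP) => [H x y a | H x].
  by move: (H x) => /forallP /(_ y) /implyP; apply.
by apply/forallP => y; apply/implyP; apply: H.
Qed.

Definition Rf (K : rooted_graph) (a : 'I_N) : P :=
  \sum_(f : {ffun vtx K -> 'I_N} | proper K N f && (f (root K) == a))
     \prod_(v | v != root K) 'X_(f v).

Lemma chromsym_Rf K : chromsym N K = \sum_a 'X_a * Rf K a.
Proof.
rewrite /chromsym (partition_big (fun f : {ffun vtx K -> 'I_N} => f (root K)) predT) //=.
apply: eq_bigr => a _; rewrite /Rf mulr_sumr.
apply: eq_bigr => f /andP[_ /eqP <-].
by rewrite (bigD1 (root K)).
Qed.


Section Glue.
Variables (A : rooted_graph) (a : vtx A) (B : rooted_graph).
Notation FA := {ffun vtx A -> 'I_N}.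
Notation FB := {ffun vtx B -> 'I_N}.
Notation FG := {ffun vtx (glue A a B) -> 'I_N}.

Definition gl (p : FA * FB) : FG :=
  [ffun z : glue_vtx A B => match z with inl x => p.1 x | inr y => p.2 (val y) end].
Definition ungl (f : FG) : FA * FB :=
  ([ffun x => f (inl x)],
   [ffun y => if insub y is Some y' then f (inr y') else f (inl a)]).

Lemma gl_ungl f : gl (ungl f) = f.
Proof.
apply/ffunP => -[x|y]; rewrite !ffunE //=.
  by rewrite valK.
Qed.

Lemma ungl_gl p : (ungl (gl p) == p) = (p.2 (root B) == p.1 a).
Proof.
case: p => fA fB /=; rewrite /ungl xpair_eqE.
have -> : [ffun x => gl (fA, fB) (inl x)] == fA.
  by apply/eqP/ffunP => x; rewrite !ffunE.
rewrite /=; apply/eqP/eqP => [/ffunP/(_ (root B))|e].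
  by rewrite ffunE insubF ?eqxx // ffunE.
apply/ffunP => y; rewrite ffunE; case: insubP => [y' _ <-|].
  by rewrite ffunE.
by rewrite negbK => /eqP ->; rewrite ffunE.
Qed.

Hypothesis irrB : ~~ adj B (root B) (root B).

Lemma proper_gl (p : FA * FB) : p.2 (root B) = p.1 a ->
  proper (glue A a B) N (gl p) = proper A N p.1 && proper B N p.2.
Proof.
case: p => fA fB /= e; apply/properP/andP => [H|[/properP HA /properP HB]].
  split; apply/properP => x y xy.
    by move: (H (inl x) (inl y) xy); rewrite !ffunE.
  case: (eqVneq x (root B)) => [ex|nx]; case: (eqVneq y (root B)) => [ey|ny].
  - by move: xy irrB; rewrite ex ey => ->.
  - have := H (inl a) (inr (exist _ y ny)); rewrite !ffunE /= eqxx ex e; apply; by rewrite -ex.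
  - have := H (inr (exist _ x nx)) (inl a); rewrite !ffunE /= eqxx ey e; apply; by rewrite -ey.
  - have := H (inr (exist _ x nx)) (inr (exist _ y ny)); rewrite !ffunE /=; apply.
    done.
move=> [x|[x nx]] [y|[y ny]]; rewrite !ffunE /= => xy.
- exact: HA.
- case/andP: xy => /eqP -> xy; rewrite -e; exact: HB.
- case/andP: xy => /eqP -> xy; rewrite -e; exact: HB.
- exact: HB.
Qed.

Lemma W_gl (p : FA * FB) :
  \prod_(v | v != root (glue A a B)) 'X_(gl p v) =
  (\prod_(x | x != root A) 'X_(p.1 x)) * \prod_(y | y != root B) 'X_(p.2 y) :> P.
Proof.
rewrite big_sumType /=; congr (_ * _).
  by apply: eq_bigr => x _; rewrite ffunE.
rewrite -prod_sig big_mkcond /=; apply: eq_bigr => y _; by rewrite ffunE.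
Qed.

Lemma Rf_glue al :
  Rf (glue A a B) al = \sum_(fA : FA | proper A N fA && (fA (root A) == al))
     (\prod_(x | x != root A) 'X_(fA x)) * Rf B (fA a).
Proof.
rewrite /Rf (reindex_onto gl ungl) /=; last by move=> f _; exact: gl_ungl.
symmetry; under eq_bigr do rewrite mulr_sumr.
rewrite pair_big_dep /=; symmetry.
apply: eq_big => [p|p].
  rewrite ungl_gl; case: (eqVneq (p.2 (root B)) (p.1 a)) => e; last by rewrite !andbF.
  rewrite proper_gl // /gl ffunE /= !andbT.
  by rewrite -!andbA; congr andb; rewrite andbC.
by move=> _; rewrite W_gl.
Qed.
End Glue.

Lemma Rf_glue_root A B al : ~~ adj B (root B) (root B) ->
  Rf (glue A (root A) B) al = Rf A al * Rf B al.
Proof.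
move=> irr; rewrite Rf_glue // /Rf mulr_suml; apply: eq_bigr => f /andP[_ /eqP ->].
done.
Qed.


Definition T (phi : 'I_N -> P) (al : 'I_N) : P :=
  \sum_b (b != al)%:R * ('X_b * phi b).

Lemma sum_ffun_bool (F : {ffun bool -> 'I_N} -> P) :
  \sum_f F f = \sum_a \sum_b F [ffun x : bool => if x then b else a].
Proof.
rewrite pair_big /=.
rewrite (reindex (fun q : 'I_N * 'I_N => [ffun x : bool => if x then q.2 else q.1])) //=.
exists (fun f => (f false, f true)) => [[a b]|f] _; rewrite ?ffunE //.
by apply/ffunP => -[]; rewrite ffunE.
Qed.

Lemma properK2 (f : {ffun bool -> 'I_N}) : proper K2 N f = (f false != f true).
Proof.
apply/properP/idP => [H|ne [] [] //= _]; first exact: (H false true).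
by rewrite eq_sym.
Qed.

Lemma Rf_glue_K2 B al : ~~ adj B (root B) (root B) ->
  Rf (glue K2 true B) al = T (Rf B) al.
Proof.
move=> irr; rewrite Rf_glue // big_mkcond /= sum_ffun_bool.
rewrite (bigD1 al) //= [X in _ + X]big1 ?addr0; last first.
  move=> a na; apply: big1 => b _; rewrite properK2 !ffunE.
  by rewrite (negbTE na) andbF.
apply: eq_bigr => b _; rewrite properK2 !ffunE eqxx andbT eq_sym.
rewrite big_mkcond big_bool /= ffunE mulr1.
by case: (b != al); rewrite ?mul1r ?mul0r.
Qed.


Definition br (u : 'I_N -> P) : P := \sum_a 'X_a * u a.

Lemma br_sym u v : br (fun a => T u a * v a) = br (fun a => u a * T v a).
Proof.
rewrite /br /T.
transitivity (\sum_a \sum_b (b != a)%:R * (('X_a * v a) * ('X_b * u b))).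
  apply: eq_bigr => a _; rewrite mulr_suml mulr_sumr; apply: eq_bigr => b _; ring.
rewrite exchange_big; apply: eq_bigr => b _; rewrite !mulr_sumr.
by apply: eq_bigr => a _; rewrite eq_sym; ring.
Qed.

Lemma br_iterT m u v :
  br (fun a => iter m T u a * v a) = br (fun a => u a * iter m T v a).
Proof.
elim: m v => // m IH v /=.
by rewrite br_sym IH -iterSr.
Qed.

Ltac fin := repeat match goal with H : is_true (?x != ?y) |- _ =>
  rewrite ?(negbTE H) ?(eq_sym y x) ?(negbTE H); clear H end.
Section Step.
Variables p q r : 'I_N -> P.
Let E a b c := ('X_a * p a) * ('X_b * q b) * ('X_c * r c).

Lemma step :
  br (fun a => p a * T q a * T r a) - br (fun a => T p a * T q a * r a) =
  br (fun a => p a * T q a) * br r - br p * br (fun a => T q a * r a).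
Proof.
rewrite /br /T.
have A4 : forall x y z w : P, x * (y * z * w) = (x * y) * (z * w) by move=> *; ring.
have E1 : \sum_a 'X_a * (p a * (\sum_b (b != a)%:R * ('X_b * q b)) * (\sum_c (c != a)%:R * ('X_c * r c)))
   = \sum_a \sum_b \sum_c ((b != a)%:R * (c != a)%:R) * E a b c.
  apply: eq_bigr => a _; rewrite A4 mulr_suml mulr_sumr; apply: eq_bigr => b _.
  by rewrite mulr_sumr mulr_sumr; apply: eq_bigr => c _; rewrite /E; ring.
have E2 : \sum_c 'X_c * ((\sum_a (a != c)%:R * ('X_a * p a)) * (\sum_b (b != c)%:R * ('X_b * q b)) * r c)
   = \sum_a \sum_b \sum_c ((a != c)%:R * (b != c)%:R) * E a b c.
  transitivity (\sum_c \sum_a \sum_b ((a != c)%:R * (b != c)%:R) * E a b c).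
    apply: eq_bigr => c _; rewrite !mulr_suml mulr_sumr.
    apply: eq_bigr => a _; rewrite mulr_sumr mulr_suml mulr_sumr.
    by apply: eq_bigr => b _; rewrite /E; ring.
  rewrite exchange_big; apply: eq_bigr => a _; exact: exchange_big.
have E3 : (\sum_a 'X_a * (p a * \sum_b (b != a)%:R * ('X_b * q b))) * \sum_c 'X_c * r c
   = \sum_a \sum_b \sum_c ((b != a)%:R) * E a b c.
  rewrite mulr_suml; apply: eq_bigr => a _ /=.
  rewrite mulrA -mulrA mulr_suml mulr_sumr; apply: eq_bigr => b _.
  by rewrite mulr_sumr mulr_sumr; apply: eq_bigr => c _; rewrite /E; ring.
have E4 : (\sum_a 'X_a * p a) * \sum_c 'X_c * ((\sum_b (b != c)%:R * ('X_b * q b)) * r c)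
   = \sum_a \sum_b \sum_c ((b != c)%:R) * E a b c.
  rewrite mulr_suml; apply: eq_bigr => a _ /=.
  transitivity (\sum_c \sum_b (b != c)%:R * E a b c).
    rewrite mulr_sumr; apply: eq_bigr => c _; rewrite mulr_suml mulr_sumr mulr_sumr.
    by apply: eq_bigr => b _; rewrite /E; ring.
  exact: exchange_big.
rewrite E1 E2 E3 E4 -!sumrB; apply: eq_bigr => a _; rewrite -!sumrB.
apply: eq_bigr => b _; rewrite -!sumrB; apply: eq_bigr => c _.
rewrite -!mulrBl; congr (_ * _).
clear; case: (eqVneq b a) => [e1|n1]; case: (eqVneq c a) => [e2|n2]; case: (eqVneq b c) => [e3|n3]; simpl; try ring; subst; match goal with H : is_true (?x != ?x) |- _ => by rewrite eqxx in H end.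
Qed.
End Step.


Lemma irr_ext K k : ~~ adj K (root K) (root K) ->
  ~~ adj (ext K k) (root (ext K k)) (root (ext K k)).
Proof. by case: k. Qed.

Lemma Rf_ext K k al : ~~ adj K (root K) (root K) ->
  Rf (ext K k) al = iter k T (Rf K) al.
Proof.
move=> irr; elim: k al => // k IH al /=.
rewrite Rf_glue_K2 ?irr_ext // /T; apply: eq_bigr => b _; by rewrite IH.
Qed.

Lemma cs_ext K k : ~~ adj K (root K) (root K) ->
  chromsym N (ext K k) = br (iter k T (Rf K)).
Proof. by move=> irr; rewrite chromsym_Rf /br; apply: eq_bigr => a _; rewrite Rf_ext. Qed.

Lemma cs_Pk k G H : ~~ adj G (root G) (root G) -> ~~ adj H (root H) (root H) ->
  chromsym N (Pk k G H) = br (fun a => iter k T (Rf G) a * Rf H a).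
Proof.
by move=> iG iH; rewrite chromsym_Rf /br; apply: eq_bigr => a _; rewrite /Pk Rf_glue_root // Rf_ext.
Qed.

Lemma cs_Sp t1 t2 t3 G1 G2 G3 : ~~ adj G1 (root G1) (root G1) ->
  ~~ adj G2 (root G2) (root G2) -> ~~ adj G3 (root G3) (root G3) ->
  chromsym N (Sp t1 t2 t3 G1 G2 G3) =
  br (fun a => iter t1 T (Rf G1) a * iter t2 T (Rf G2) a * iter t3 T (Rf G3) a).
Proof.
move=> i1 i2 i3; rewrite chromsym_Rf /br; apply: eq_bigr => a _; rewrite /Sp /=.
by rewrite Rf_glue_root ?irr_ext // Rf_glue_root ?irr_ext // !Rf_ext.
Qed.

Lemma stepG G H J a h c : ~~ adj G (root G) (root G) ->
  ~~ adj H (root H) (root H) -> ~~ adj J (root J) (root J) ->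
  chromsym N (Sp a h.+1 c.+1 G H J) - chromsym N (Sp a.+1 h.+1 c G H J) =
  chromsym N (Pk (a + h.+1) G H) * chromsym N (Gpow J c)
  - chromsym N (Gpow G a) * chromsym N (Pk (h.+1 + c) H J).
Proof.
move=> iG iH iJ; rewrite !cs_Sp // !cs_Pk // /Gpow !cs_ext //.
rewrite [(a + h.+1)%N]addnC iterD (br_iterT h.+1 (iter a T (Rf G))) [(h.+1 + c)%N]addnC iterD (br_iterT c (iter h.+1 T (Rf H))).
exact: step.
Qed.
End S.

Theorem proposition4p2 (G H J : rooted_graph) (g h j : nat) :
  simple G -> simple H -> simple J -> (1 <= h)%N ->
  forall N : nat,
    chromsym N (Sp g h j G H J) =
    chromsym N (Sp (g + j) h 0 G H J) +
    \sum_(1 <= i < j.+1)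
      (chromsym N (Pk (g + h + i - 1) G H) * chromsym N (Gpow J (j - i))
       - chromsym N (Gpow G (g + i - 1)) * chromsym N (Pk (h + j - i) H J)).
Proof.
move=> [_ sG] [_ sH] [_ sJ] h1 N.
have iG : ~~ adj G (root G) (root G) by rewrite sG.
have iH : ~~ adj H (root H) (root H) by rewrite sH.
have iJ : ~~ adj J (root J) (root J) by rewrite sJ.
case: h h1 => // h _.
elim: j g => [|j IH] g.
  by rewrite big_geq // addr0 addn0.
rewrite big_nat_recl //.
have st := stepG N G H J g h j iG iH iJ.
move/eqP: st; rewrite subr_eq => /eqP ->.
rewrite IH.
have eS : \sum_(1 <= i < j.+1)
      (chromsym N (Pk (g.+1 + h.+1 + i - 1) G H) * chromsym N (Gpow J (j - i))
       - chromsym N (Gpow G (g.+1 + i - 1)) * chromsym N (Pk (h.+1 + j - i) H J))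
  = \sum_(1 <= i < j.+1)
      (chromsym N (Pk (g + h.+1 + i.+1 - 1) G H) * chromsym N (Gpow J (j.+1 - i.+1))
       - chromsym N (Gpow G (g + i.+1 - 1)) * chromsym N (Pk (h.+1 + j.+1 - i.+1) H J)).
  apply: eq_big_nat => i /andP[i1 _].
  have -> : (g.+1 + h.+1 + i - 1 = g + h.+1 + i.+1 - 1)%N by lia.
  have -> : (g.+1 + i - 1 = g + i.+1 - 1)%N by lia.
  have -> : (h.+1 + j - i = h.+1 + j.+1 - i.+1)%N by lia.
  by rewrite subSS.
rewrite eS.
have -> : (g.+1 + j = g + j.+1)%N by lia.
have -> : (g + h.+1 + 1 - 1 = g + h.+1)%N by lia.
have -> : (j.+1 - 1 = j)%N by lia.
have -> : (g + 1 - 1 = g)%N by lia.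
have -> : (h.+1 + j.+1 - 1 = h.+1 + j)%N by lia.
ring.
Qed.
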